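(* Let $m\in\mathbb{N}$. (i) There exist curves $\sigma,\tau$ of complexity $m$ in Euclidean space and a parameter $k$ such that the lengths $|T_{(k\text{-}DTW)}|$ and $|T_{(DTW)}|$ of an optimal $k$-DTW traversal and an optimal DTW traversal of $\sigma$ and $\tau$ differ by an amount linear in $m$ (i.e., $\Omega(m)$); moreover, such instances exist both with $|T_{(k\text{-}DTW)}|<|T_{(DTW)}|$ and with $|T_{(k\text{-}DTW)}|>|T_{(DTW)}|$. (ii) Assume $m\ge 5$. Then for every $k$ with $1\le k\le 4\lfloor m/5\rfloor$ there exist curves $\sigma,\tau$ of complexity $m$ such that $d_{k\text{-}DTW}(\sigma,\tau)$ is not equal to the sum of the $k$ largest distances contributing to $d_{DTW}(\sigma,\tau)$ (i.e., the $k$ largest matched distances of a traversal realizing the DTW distance).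
   Context: Curves are vertex sequences in $\mathbb{R}^d$. For $\sigma=(v_1,\dots,v_{m'})$ and $\tau=(w_1,\dots,w_{m''})$ a traversal $T$ is a sequence of index pairs starting with $(1,1)$, ending with $(m',m'')$, where each $(i,j)$ is followed only by $(i+1,j)$, $(i,j+1)$ or $(i+1,j+1)$; $|T|$ is its number of pairs. The DTW distance is $d_{DTW}(\sigma,\tau)=\min_T\sum_{(i,j)\in T}\|v_i-w_j\|$. With $s^{(T)}_1\ge s^{(T)}_2\ge\dots$ the matched distances of $T$ sorted non-increasingly (padded with zeros beyond $|T|$), $d_{k\text{-}DTW}(\sigma,\tau)=\min_T\sum_{l=1}^k s^{(T)}_l$. An optimal DTW (resp. $k$-DTW) traversal is one attaining the respective minimum. *)

(* Defs.v *)
From mathcomp Require Import all_boot all_order all_algebra.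
From mathcomp Require Import classical_sets reals Rstruct.
Set Implicit Arguments. Unset Strict Implicit. Unset Printing Implicit Defensive.
Import Order.TTheory GRing.Theory Num.Theory.
Local Open Scope ring_scope.
Local Open Scope classical_set_scope.

Notation R := Rdefinitions.R.

(* A point of R^d is a row vector; a curve is a (nonempty) sequence of points;
   its complexity is its size. *)
Definition point (d : nat) := 'rV[R]_d.
Definition curve (d : nat) := seq (point d).

Definition edist (d : nat) (v w : point d) : R :=
  Num.sqrt (\sum_(i < d) (v ord0 i - w ord0 i) ^+ 2).

(* Traversals use 0-based indices: start (0,0), end (m'-1, m''-1). *)
Definition trav_step (p q : nat * nat) : bool :=
  [|| (q.1 == p.1.+1) && (q.2 == p.2),
      (q.1 == p.1) && (q.2 == p.2.+1) |
      (q.1 == p.1.+1) && (q.2 == p.2.+1)].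

Definition is_traversal (m1 m2 : nat) (T : seq (nat * nat)) : Prop :=
  exists rest, T = (0%N, 0%N) :: rest /\ (0 < m1)%N /\ (0 < m2)%N /\
    path trav_step (0%N, 0%N) rest /\ last (0%N, 0%N) rest = (m1.-1, m2.-1).

Definition matched (d : nat) (s t : curve d) (T : seq (nat * nat)) : seq R :=
  [seq edist (nth 0 s p.1) (nth 0 t p.2) | p <- T].

(* sum of the k largest entries (padding with zeros beyond |T| contributes 0) *)
Definition topk (k : nat) (l : seq R) : R :=
  \sum_(x <- take k (sort (fun x y : R => y <= x) l ++ nseq k 0)) x.

Definition dtw_cost (d : nat) (s t : curve d) T : R := \sum_(x <- matched s t T) x.
Definition kdtw_cost (k d : nat) (s t : curve d) T : R := topk k (matched s t T).

Definition d_DTW (d : nat) (s t : curve d) : R :=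
  inf [set dtw_cost s t T | T in [set T | is_traversal (size s) (size t) T]].
Definition d_kDTW (k d : nat) (s t : curve d) : R :=
  inf [set kdtw_cost k s t T | T in [set T | is_traversal (size s) (size t) T]].

Definition optimal_DTW (d : nat) (s t : curve d) T : Prop :=
  is_traversal (size s) (size t) T /\
  forall T', is_traversal (size s) (size t) T' -> dtw_cost s t T <= dtw_cost s t T'.
Definition optimal_kDTW (k d : nat) (s t : curve d) T : Prop :=
  is_traversal (size s) (size t) T /\
  forall T', is_traversal (size s) (size t) T' -> kdtw_cost k s t T <= kdtw_cost k s t T'.

(* Main.v *)
Require Import Defs.
From mathcomp Require Import all_boot all_order all_algebra.
From mathcomp Require Import classical_sets reals Rstruct.
From mathcomp Require Import zify ring lra.
Import Order.TTheory GRing.Theory Num.Theory.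
Set Implicit Arguments. Unset Strict Implicit. Unset Printing Implicit Defensive.
Local Open Scope ring_scope.

Lemma step_le p q : trav_step p q -> (p.1 <= q.1)%N && (p.2 <= q.2)%N.
Proof.
case: p q => [a b] [c d]; rewrite /trav_step /=.
by case/or3P => /andP[/eqP-> /eqP->]; rewrite ?leqnSn ?leqnn.
Qed.

Lemma path_le x rest : path trav_step x rest -> forall y, y \in x :: rest ->
  (y.1 <= (last x rest).1)%N && (y.2 <= (last x rest).2)%N.
Proof.
elim: rest x => [|z rest IH] x /=.
  by move=> _ y; rewrite inE => /eqP->; rewrite !leqnn.
case/andP=> hxz hp y; rewrite inE => /orP[/eqP->|hy]; last exact: IH.
have /andP[h1 h2] := step_le hxz.
have /andP[h3 h4] := IH z hp z (mem_head _ _).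
by rewrite (leq_trans h1 h3) (leq_trans h2 h4).
Qed.

Lemma trav_range m1 m2 T : is_traversal m1 m2 T -> forall p, p \in T ->
  (p.1 < m1)%N && (p.2 < m2)%N.
Proof.
case=> rest [-> [h1 [h2 [hp hl]]]] p hin.
have /andP[] := path_le hp hin; rewrite hl /= => a b.
by rewrite -(ltn_predK h1) -(ltn_predK h2) !ltnS a b.
Qed.

Lemma potential (P : nat * nat -> Prop) (f Phi : nat * nat -> R) x rest :
  path trav_step x rest -> (forall y, y \in x :: rest -> P y) ->
  (forall p q, P p -> P q -> trav_step p q -> Phi q - Phi p <= f q) ->
  Phi (last x rest) - Phi x <= \sum_(y <- rest) f y.
Proof.
move=> + + hs; elim: rest x => [|z rest IH] x /=.
  by move=> _ _; rewrite subrr big_nil.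
case/andP=> hxz hp hP; rewrite big_cons.
have h1 : Phi (last z rest) - Phi z <= \sum_(y <- rest) f y.
  by apply: IH => // y hy; apply: hP; rewrite inE hy orbT.
have h2 : Phi z - Phi x <= f z.
  by apply: hs => //; apply: hP; rewrite !inE eqxx ?orbT.
lra.
Qed.

Lemma trav_potential m1 m2 T (P : nat * nat -> Prop) (f Phi : nat * nat -> R) :
  is_traversal m1 m2 T -> (forall y, y \in T -> P y) ->
  (forall p q, (p.1 < m1)%N -> (p.2 < m2)%N -> (q.1 < m1)%N -> (q.2 < m2)%N ->
     P p -> P q -> trav_step p q -> Phi q - Phi p <= f q) ->
  Phi (m1.-1, m2.-1) - Phi (0%N, 0%N) + f (0%N, 0%N) <= \sum_(y <- T) f y.
Proof.
move=> hT hP hs; have hr := trav_range hT.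
case: hT => rest [eT [h1 [h2 [hp hl]]]].
move: hr hP; rewrite eT big_cons -hl => hr hP.
suff: Phi (last (0%N, 0%N) rest) - Phi (0%N, 0%N) <= \sum_(y <- rest) f y by lra.
apply: (potential (P := fun y => [/\ (y.1 < m1)%N, (y.2 < m2)%N & P y])) => //.
  by move=> y hy; have /andP[a b] := hr y hy; split => //; apply: hP.
by move=> p q [a b c] [d e g]; apply: hs.
Qed.

Lemma sum_le_size (T : eqType) (s : seq T) (f : T -> R) M :
  (forall x, x \in s -> f x <= M) -> \sum_(x <- s) f x <= (size s)%:R * M.
Proof.
elim: s => [|y s IH] h; first by rewrite big_nil mul0r.
rewrite big_cons /= -addn1 natrD mulrDl mul1r.
have h1 := h y (mem_head _ _).
have h2 : \sum_(x <- s) f x <= (size s)%:R * M.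
  by apply: IH => x hx; apply: h; rewrite inE hx orbT.
lra.
Qed.

Lemma sum_ge_size (T : eqType) (s : seq T) (f : T -> R) M :
  (forall x, x \in s -> M <= f x) -> (size s)%:R * M <= \sum_(x <- s) f x.
Proof.
elim: s => [|y s IH] h; first by rewrite big_nil mul0r.
rewrite big_cons /= -addn1 natrD mulrDl mul1r.
have h1 := h y (mem_head _ _).
have h2 : (size s)%:R * M <= \sum_(x <- s) f x.
  by apply: IH => x hx; apply: h; rewrite inE hx orbT.
lra.
Qed.

Definition geR := fun x y : R => y <= x.

Lemma mem_topk k l x : x \in take k (sort geR l ++ nseq k 0) -> x \in l \/ x = 0.
Proof.
move/mem_take; rewrite mem_cat mem_sort => /orP[->|]; first by left.
by rewrite mem_nseq => /andP[_ /eqP->]; right.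
Qed.

Lemma topk_ge0 k l : (forall x, x \in l -> 0 <= x) -> 0 <= topk k l.
Proof.
move=> h; rewrite /topk big_seq; apply: sumr_ge0 => x /mem_topk [/h //|->//].
Qed.

Lemma topk_le k l M : 0 <= M -> (forall x, x \in l -> x <= M) ->
  topk k l <= k%:R * M.
Proof.
move=> hM h; rewrite /topk.
have := @sum_le_size _ (take k (sort geR l ++ nseq k 0)) id M.
move=> /(_ _) H; apply: le_trans (H _) _.
  by move=> x /mem_topk [/h //|->//].
apply: ler_wpM2r => //; rewrite ler_nat size_take; case: ifP => //.
by move/negbT; rewrite -leqNgt.
Qed.

Lemma geR_trans : transitive geR.
Proof. by move=> y x z hxy hyz; rewrite /geR in hxy hyz *; apply: le_trans hyz hxy. Qed.

Lemma geR_total : total geR.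
Proof. by move=> x y; rewrite /geR orbC le_total. Qed.

Lemma topk_ge k l a b x0 : (1 <= k)%N -> (k <= size l)%N -> 0 <= a ->
  (forall x, x \in l -> a <= x) -> x0 \in l -> b <= x0 ->
  (k.-1)%:R * a + b <= topk k l.
Proof.
move=> hk hs ha h hx0 hb; rewrite /topk.
have ss : size (sort geR l) = size l by rewrite size_sort.
have -> : take k (sort geR l ++ nseq k 0) = take k (sort geR l).
  rewrite take_cat; case: ifP => // /negbT; rewrite -leqNgt ss => hle.
  have -> : k = size l by apply/eqP; rewrite eqn_leq hs hle.
  by rewrite subnn take0 cats0 take_oversize // ss.
have srt := sort_sorted geR_total l.
have hmem : forall x, x \in sort geR l -> a <= x by move=> x; rewrite mem_sort; apply: h.
have hx0' : x0 \in sort geR l by rewrite mem_sort.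
move: srt hmem hx0' ss; case: (sort geR l) => [|h0 s'] //=.
move=> srt hmem hx0' ss.
have hall := order_path_min geR_trans srt.
have hh : b <= h0.
  move: hx0'; rewrite inE => /orP[/eqP<-//|hin].
  by apply: le_trans hb _; move/allP: hall => /(_ _ hin).
case: k hk hs => // k _ hs; rewrite /= big_cons.
have : (size (take k s'))%:R * a <= \sum_(x <- take k s') x.
  by apply: (@sum_ge_size _ _ id) => x /mem_take hx; apply: hmem; rewrite inE hx orbT.
rewrite size_take; case: ifP => [_|/negbT]; first by lra.
rewrite -leqNgt => hle.
have -> : size s' = k by apply/eqP; rewrite eqn_leq hle -ltnS ss.
lra.
Qed.

Definition vec (d : nat) (a : R) (p : nat) (b : R) : 'rV[R]_d :=
  \row_(k < d) (a * (k == 0%N :> nat)%:R + b * (k == p :> nat)%:R).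

Lemma sum_ind d i (x : R) : (i < d)%N -> \sum_(k < d) ((k == i :> nat)%:R * x) = x.
Proof.
move=> hi; rewrite (bigD1 (Ordinal hi)) //= eqxx mul1r big1 ?addr0 // => k hk.
suff -> : (k == i :> nat) = false by rewrite mul0r.
by apply/negbTE; apply: contra hk => /eqP hk; apply/eqP/val_inj.
Qed.

Lemma edist_vec d a p b c q e : (0 < p < d)%N -> (0 < q < d)%N ->
  edist (vec d a p b) (vec d c q e) =
  Num.sqrt ((a - c)^+2 + (if p == q then (b - e)^+2 else b^+2 + e^+2)).
Proof.
move=> hp hq; rewrite /edist; congr Num.sqrt.
transitivity (\sum_(k < d) ((k == 0%N :> nat)%:R * (a - c)^+2 +
   (k == p :> nat)%:R * (if p == q then (b - e)^+2 else b^+2) +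
   (k == q :> nat)%:R * (if p == q then 0 else e^+2))).
  apply: eq_bigr => k _; rewrite !mxE; move: (nat_of_ord k) => n.
  case E0: (n == 0)%N; case Ep: (n == p)%N; case Eq: (n == q)%N; case Epq: (p == q)%N;
    rewrite /=; try lia; ring.
rewrite !big_split /= !sum_ind //; [|lia|lia|lia].
by case: (p == q); ring.
Qed.

Lemma stepP p q : trav_step p q ->
  [\/ q = (p.1.+1, p.2), q = (p.1, p.2.+1) | q = (p.1.+1, p.2.+1)].
Proof.
case: p q => [a b] [c e]; rewrite /trav_step /=.
by case/or3P => /andP[/eqP-> /eqP->]; [apply: Or31|apply: Or32|apply: Or33].
Qed.

Lemma sum_one (T : Type) (s : seq T) : \sum_(x <- s) (1 : R) = (size s)%:R.
Proof. by elim: s => [|x s IH]; rewrite ?big_nil ?big_cons ?IH //= -addn1 natrD addrC. Qed.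

Lemma sqrt_sq (x y : R) : 0 <= x -> y = x ^+ 2 -> Num.sqrt y = x.
Proof. by move=> hx ->; rewrite sqrtr_sqr ger0_norm. Qed.

Lemma diag_path a n : path trav_step (a, a) [seq (i, i) | i <- iota a.+1 n] /\
  last (a, a) [seq (i, i) | i <- iota a.+1 n] = (a + n, a + n)%N.
Proof.
elim: n a => [|n IH] a /=; first by rewrite addn0.
have [h1 h2] := IH a.+1; split; last by rewrite h2 addSnnS.
by rewrite h1 andbT /trav_step /= !eqxx !orbT.
Qed.

Definition Dg m := (0%N, 0%N) :: [seq (i, i) | i <- iota 1 m.-1].

Lemma Dg_trav m : (0 < m)%N -> is_traversal m m (Dg m).
Proof.
move=> hm; exists [seq (i, i) | i <- iota 1 m.-1]; do 4!split => //.
  exact: (diag_path 0 m.-1).1.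
by rewrite (diag_path 0 m.-1).2.
Qed.

Lemma row_path a b n : path trav_step (a, b) [seq (a, j) | j <- iota b.+1 n] /\
  last (a, b) [seq (a, j) | j <- iota b.+1 n] = (a, b + n)%N.
Proof.
elim: n b => [|n IH] b /=; first by rewrite addn0.
have [h1 h2] := IH b.+1; split; last by rewrite h2 addSnnS.
by rewrite h1 andbT /trav_step /= !eqxx !orbT.
Qed.

Lemma col_path a b n : path trav_step (a, b) [seq (i, b) | i <- iota a.+1 n] /\
  last (a, b) [seq (i, b) | i <- iota a.+1 n] = (a + n, b)%N.
Proof.
elim: n a => [|n IH] a /=; first by rewrite addn0.
have [h1 h2] := IH a.+1; split; last by rewrite h2 addSnnS.
by rewrite h1 andbT /trav_step /= !eqxx ?orbT ?andbT /=.
Qed.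

Definition Lp m := (0%N, 0%N) :: ([seq (0%N, j) | j <- iota 1 (m - 2)] ++
   [seq (i, m.-1) | i <- iota 1 m.-1]).

Lemma Lp_trav m : (2 <= m)%N -> is_traversal m m (Lp m).
Proof.
case: m => [|[|n]] // _; rewrite /Lp /= subn2 /=.
exists ([seq (0%N, j) | j <- iota 1 n] ++ [seq (i, n.+1) | i <- iota 1 n.+1]).
do 3!split => //.
have [r1 r2] := row_path 0 0 n; have [c1 c2] := col_path 1 n.+1 n.
rewrite cat_path last_cat r1 r2 /= c1 c2 andbT; split => //.
by rewrite /trav_step /= !eqxx !orbT.
Qed.

Lemma mem_Dg m p : p \in Dg m -> p.1 = p.2 /\ (p.1 < m \/ m = 0)%N.
Proof.
rewrite inE => /orP[/eqP->|/mapP[i]]; first by split => //; case: m; [right|left].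
by rewrite mem_iota => hi ->; split => //=; left; move: hi; lia.
Qed.

Lemma size_Dg m : size (Dg m) = maxn m 1.
Proof. rewrite /= size_map size_iota; case: m => //. Qed.

Lemma mem_Lp m p : (2 <= m)%N -> p \in Lp m ->
  p = (0, 0)%N \/ (p.1 = 0 /\ 1 <= p.2 <= m - 2)%N \/ (1 <= p.1 <= m.-1 /\ p.2 = m.-1)%N.
Proof.
move=> hm; rewrite inE => /orP[/eqP->|]; first by left.
rewrite mem_cat => /orP[/mapP[j]|/mapP[i]]; rewrite mem_iota => hj ->; right.
  by left; split => //; move: hj; lia.
by right; split => //; move: hj; lia.
Qed.


Lemma natR_le x y z : (x <= y + z)%N -> (x%:R - y%:R <= z%:R :> R).
Proof. by rewrite -(ler_nat R) natrD => h; lra. Qed.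

Definition sB m : curve m := mkseq (fun i => if i == 0%N then vec m 0 1 0 else vec m 5 1 0) m.
Definition tB m : curve m := mkseq (fun j => if j == m.-1 then vec m 3 1 0 else vec m 2 1 0) m.
Definition cB m (p : nat * nat) := edist (nth 0 (sB m) p.1) (nth 0 (tB m) p.2).

Lemma cB_val m i j : (2 <= m)%N -> (i < m)%N -> (j < m)%N ->
  cB m (i, j) = if (i == 0%N) == (j == m.-1) then 3 else 2.
Proof.
move=> hm hi hj; rewrite /cB /= !nth_mkseq //.
have h1 : (0 < 1 < m)%N by rewrite /=; lia.
case: ifP => _; case: ifP => _; rewrite edist_vec // eqxx /=;
  apply: sqrt_sq => //; ring.
Qed.

Lemma cB_ge0 m p : 0 <= cB m p.
Proof. exact: sqrtr_ge0. Qed.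

Lemma cB_bounds m T p : (2 <= m)%N -> is_traversal m m T -> p \in T ->
  2 <= cB m p <= 3.
Proof.
move=> hm hT hp; have /andP[a b] := trav_range hT hp.
case: p a b hp => i j /= a b _; rewrite cB_val //; case: ifP => _; lra.
Qed.

Lemma cheapB_iff a b m : ((a == 0%N) == (b == m.-1)) = false ->
  (a == 0%N) && (b != m.-1) || (a != 0%N) && (b == m.-1).
Proof. by case: (a == 0%N); case: (b == m.-1). Qed.

Definition phiB m (p : nat * nat) : nat := if p.1 == 0%N then p.2 else (p.1 + m - 2)%N.

Lemma cheapB_len m T : (2 <= m)%N -> is_traversal m m T ->
  (forall p, p \in T -> cB m p <= 2) -> (2 * m - 2 <= size T)%N.
Proof.
move=> hm hT hc.
have := trav_potential (P := fun p => cB m p <= 2) (f := fun _ => 1)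
   (Phi := fun p => (phiB m p)%:R) hT hc.
rewrite sum_one => /(_ _) H.
have {}H : (phiB m (m.-1, m.-1))%:R - (phiB m (0,0)%N)%:R + 1 <= (size T)%:R :> R.
  apply: H => [[a b] [c e]] /= ha hb hc' he; rewrite !cB_val //.
  case: ifP => Hp hp; first by exfalso; lra.
  case: ifP => Hq hq; first by exfalso; lra.
  move=> st; move: (cheapB_iff Hp) (cheapB_iff Hq).
  case/stepP: st => /= [[-> ->]|[-> ->]|[-> ->]] => Cp Cq; apply: (@natR_le _ _ 1);
    rewrite /phiB /=; repeat case: ifP => ?; lia.
move: H; rewrite /phiB /=; have -> : (m.-1 == 0%N) = false by lia.
rewrite subr0 natr1 ler_nat; lia.
Qed.

Lemma size_trav_ge m1 m2 T : is_traversal m1 m2 T -> (m1 <= size T)%N.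
Proof.
move=> hT; have hm1 : (0 < m1)%N by case: hT => r [_ [h _]].
have := trav_potential (P := fun _ => True) (f := fun _ => 1)
   (Phi := fun p => (p.1)%:R) hT (fun _ _ => I).
rewrite sum_one => /(_ _) H.
have {}H : (m1.-1)%:R - 0%:R + 1 <= (size T)%:R :> R.
  apply: H => [[a b] [c e]] /= _ _ _ _ _ _ /stepP /= [[-> _]|[-> _]|[-> _]];
    apply: (@natR_le _ _ 1); lia.
by move: H; rewrite subr0 natr1 ler_nat prednK.
Qed.

Lemma dtwB m T : dtw_cost (sB m) (tB m) T = \sum_(p <- T) cB m p.
Proof. by rewrite /dtw_cost /matched big_map. Qed.

Lemma Dg_costB m : (2 <= m)%N -> dtw_cost (sB m) (tB m) (Dg m) <= m%:R * 3.
Proof.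
move=> hm; rewrite dtwB.
apply: le_trans (@sum_le_size _ (Dg m) (cB m) 3 _) _.
  by move=> p hp; case/andP: (cB_bounds hm (Dg_trav (ltnW hm)) hp).
by rewrite size_Dg; have -> : maxn m 1 = m by lia.
Qed.

Lemma Lp_cheapB m p : (2 <= m)%N -> p \in Lp m -> cB m p <= 2.
Proof.
move=> hm hp; case: p hp => a b hp.
have hm1 : (0 < m)%N by lia.
case: (mem_Lp hm hp) => [[-> ->]|[/= [e1 e2]|/= [e1 e2]]].
- rewrite cB_val //; have -> : (0%N == m.-1) = false by lia.
  by rewrite /=; lra.
- rewrite e1 cB_val //; last by lia.
  have -> : (b == m.-1) = false by lia.
  by rewrite /=; lra.
- rewrite e2 cB_val //; last by lia.
  have -> : (a == 0%N) = false by lia.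
  by rewrite eqxx /=; lra.
  lia.
Qed.

Lemma topk_LpB m k : (2 <= m)%N -> kdtw_cost k (sB m) (tB m) (Lp m) <= k%:R * 2.
Proof.
move=> hm; apply: topk_le => // x /mapP[p hp ->]; exact: Lp_cheapB.
Qed.

Lemma partB : exists c : R, 0 < c /\ exists m0 : nat, forall m : nat, (m0 <= m)%N ->
     exists (d : nat) (s t : curve d) (k : nat),
       size s = m /\ size t = m /\ (1 <= k)%N /\
       forall T1 T2, optimal_kDTW k s t T1 -> optimal_DTW s t T2 ->
         (size T2)%:R + c * m%:R <= (size T1)%:R.
Proof.
exists (1/4); split; first lra.
exists 8%N => m hm; exists m, (sB m), (tB m), 1%N.
have ss : size (sB m) = m by rewrite size_mkseq.
have st : size (tB m) = m by rewrite size_mkseq.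
have hm2 : (2 <= m)%N by lia.
do 3!split => //.
move=> T1 T2 [h1 o1] [h2 o2]; rewrite ss st in h1 o1 h2 o2.
have c1 : forall p, p \in T1 -> cB m p <= 2.
  move=> p hp.
  have kL := topk_LpB 1 hm2.
  have o := o1 _ (Lp_trav hm2).
  have g : (1.-1)%:R * 0 + cB m p <= topk 1 (matched (sB m) (tB m) T1).
    apply: topk_ge => //.
    - by rewrite size_map; apply: leq_trans _ (size_trav_ge h1); lia.
    - by move=> x /mapP[q _ ->]; exact: cB_ge0.
    - exact: map_f.
  rewrite /kdtw_cost in o kL; rewrite mul0r add0r in g; lra.
have l1 := cheapB_len hm2 h1 c1.
have l2 : 2 * (size T2)%:R <= m%:R * 3 :> R.
  apply: le_trans _ (Dg_costB hm2); apply: le_trans _ (o2 _ (Dg_trav (ltnW hm2))).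
  rewrite dtwB mulrC; apply: sum_ge_size => p hp.
  by case/andP: (cB_bounds hm2 h2 hp).
have l3 : (2 * m <= size T1 + 2)%N by lia.
move: l3; rewrite -(ler_nat R) natrD natrM => l3.
have l4 : 8%:R <= m%:R :> R by rewrite ler_nat.
lra.
Qed.

Lemma d_kDTW_le k d (s t : curve d) T :
  is_traversal (size s) (size t) T -> d_kDTW k s t <= kdtw_cost k s t T.
Proof.
move=> hT; rewrite /d_kDTW; apply: ge_inf; last by exists T.
exists 0 => y [T' _ <-]; apply: topk_ge0 => x /mapP[p _ ->]; exact: sqrtr_ge0.
Qed.

Lemma partII : forall m : nat, (5 <= m)%N -> forall k : nat, (1 <= k <= 4 * (m %/ 5))%N ->
     exists (d : nat) (s t : curve d),
       size s = m /\ size t = m /\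
       forall T, optimal_DTW s t T -> d_kDTW k s t <> topk k (matched s t T).
Proof.
move=> m hm k hk; exists m, (sB m), (tB m).
have ss : size (sB m) = m by rewrite size_mkseq.
have st : size (tB m) = m by rewrite size_mkseq.
have hm2 : (2 <= m)%N by lia.
have hkm : (k < m)%N by lia.
split => //; split => // T [hT oT]; rewrite ss st in hT oT.
have dL : d_kDTW k (sB m) (tB m) <= k%:R * 2.
  apply: le_trans (topk_LpB k hm2); apply: d_kDTW_le; rewrite ss st; exact: Lp_trav.
have dD := le_trans (oT _ (Dg_trav (ltnW hm2))) (Dg_costB hm2).
case: (boolP (has (fun p => 2 < cB m p) T)) => [/hasP[p hp hgt]|hn].
  have g : (k.-1)%:R * 2 + cB m p <= topk k (matched (sB m) (tB m) T).
    apply: topk_ge => //.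
    - by case/andP: hk.
    - by rewrite size_map; apply: leq_trans (ltnW hkm) (size_trav_ge hT).
    - by move=> x /mapP[q hq ->]; case/andP: (cB_bounds hm2 hT hq).
    - exact: map_f.
  have e : (k.-1)%:R + 1 = k%:R :> R by rewrite natr1 prednK //; case/andP: hk.
  move=> E; rewrite -E in g; move: g dL e hgt.
  move: (d_kDTW k (sB m) (tB m)) (cB m p) ((k.-1)%:R) (k%:R) => D c x y.
  rewrite /=. lra.
exfalso.
have c1 : forall p, p \in T -> cB m p <= 2.
  by move=> p hp; move/hasPn: hn => /(_ p hp); rewrite -leNgt.
have l1 := cheapB_len hm2 hT c1.
have l2 : 2 * (size T)%:R <= m%:R * 3 :> R.
  apply: le_trans dD; rewrite dtwB mulrC; apply: sum_ge_size => p hp.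
  by case/andP: (cB_bounds hm2 hT hp).
have l3 : (2 * m <= size T + 2)%N by lia.
move: l3; rewrite -(ler_nat R) natrD natrM => l3.
have l4 : 5%:R <= m%:R :> R by rewrite ler_nat.
have : (5%:R : R) < 5%:R by lra.
by rewrite ltxx.
Qed.


Lemma sqrt_geq (x y : R) : 0 <= y -> y ^+ 2 <= x -> y <= Num.sqrt x.
Proof. by move=> hy h; rewrite -(@sqrt_sq y (y ^+ 2)) //; apply: ler_wsqrtr. Qed.

Lemma sqrt_le_sq (x y : R) : 0 <= x -> 0 <= y -> Num.sqrt x <= y -> x <= y ^+ 2.
Proof.
move=> hx hy h; rewrite -(sqr_sqrtr hx).
have h0 := sqrtr_ge0 x.
by rewrite !expr2; apply: ler_pM.
Qed.

Definition sAf m i : 'rV[R]_m :=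
  if i == 0%N then vec m 0 1 0 else if i == m.-1 then vec m 3 1 0 else vec m 3 i 1.
Definition tAf m j : 'rV[R]_m :=
  if j == 0%N then vec m 0 1 0 else if j == 1%N then vec m 3 1 4
  else if j == m.-1 then vec m 3 1 0 else vec m 0 j 1.
Definition sA m : curve m := mkseq (sAf m) m.
Definition tA m : curve m := mkseq (tAf m) m.
Definition cA m (p : nat * nat) := edist (nth 0 (sA m) p.1) (nth 0 (tA m) p.2).

Definition sqA m i j : R :=
  if i == 0%N then (if j == 0%N then 0 else if j == 1%N then 25 else if j == m.-1 then 9 else 1)
  else if i == m.-1 then (if j == 0%N then 9 else if j == 1%N then 16 else if j == m.-1 then 0 else 10)
  else (if j == 0%N then 10 else if j == 1%N then (if i == 1%N then 9 else 17)
        else if j == m.-1 then 1 else if i == j then 9 else 11).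

Lemma cA_val m i j : (7 <= m)%N -> (i < m)%N -> (j < m)%N ->
  cA m (i, j) = Num.sqrt (sqA m i j).
Proof.
move=> hm hi hj; rewrite /cA /= !nth_mkseq // /sAf /tAf /sqA.
repeat (case: ifP => ?); try (exfalso; lia);
  rewrite edist_vec; try lia; congr Num.sqrt; rewrite ?eqxx;
  repeat (case: ifP => ?); try (exfalso; lia); ring.
Qed.

Lemma sqrt_leq (x y : R) : 0 <= y -> x <= y ^+ 2 -> Num.sqrt x <= y.
Proof. by move=> hy h; rewrite -(@sqrt_sq y (y ^+ 2)) //; apply: ler_wsqrtr. Qed.

Lemma lra_false (P : Prop) : (0:R) < 0 -> P. Proof. by rewrite ltxx. Qed.
Ltac contra_lra := apply: lra_false; lra.

Lemma sqA_ge0 m i j : 0 <= sqA m i j.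
Proof. rewrite /sqA; repeat case: ifP => ?; lra. Qed.

Definition wA m (p : nat * nat) : nat :=
  if (0 < p.1)%N && (p.2 < m.-1)%N then 4%N
  else if ((p.1 == 0%N) && (p.2 == 0%N)) || ((p.1 == m.-1) && (p.2 == m.-1)) then 1%N else 2%N.

Lemma cA_lb m i j : (7 <= m)%N -> (i < m)%N -> (j < m)%N ->
  (wA m (i, j))%:R <= cA m (i, j) + 1.
Proof.
move=> hm hi hj; rewrite cA_val // /wA /sqA /=.
have h3' : forall x : R, 9 <= x -> 3 <= Num.sqrt x.
  by move=> x hx; apply: sqrt_geq; rewrite ?expr2; lra.
have h1' : forall x : R, 1 <= x -> 1 <= Num.sqrt x.
  by move=> x hx; apply: sqrt_geq; rewrite ?expr2; lra.
have h0 : forall x : R, 0 <= Num.sqrt x by move=> x; exact: sqrtr_ge0.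
repeat (case: ifP => ?); try (exfalso; lia).
all: match goal with |- context[Num.sqrt ?x] => have := h0 x;
  first [have := h3' x ltac:(lra); lra | have := h1' x ltac:(lra); lra | lra] end.
Qed.

Definition CA m (p : nat * nat) : bool :=
  (p.1 == 0%N) && (p.2 != 1%N) || (p.2 == m.-1) || (p.1 == p.2) ||
  (p.1 == m.-1) && (p.2 == 0%N).

Lemma cA_cheap m i j : (7 <= m)%N -> (i < m)%N -> (j < m)%N ->
  cA m (i, j) <= 3 -> CA m (i, j).
Proof.
move=> hm hi hj; rewrite cA_val // => h.
have h9 : sqA m i j <= 3 ^+ 2 by apply: (sqrt_le_sq _ _ h); [exact: sqA_ge0|lra].
move: h9; rewrite expr2 /sqA /CA /=.
repeat (case: ifP => ?); move=> hh; first [lia | contra_lra].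
Qed.

Lemma cA_diag m i : (7 <= m)%N -> (i < m)%N -> cA m (i, i) <= 3.
Proof.
move=> hm hi; rewrite cA_val //; apply: sqrt_leq; first lra.
rewrite expr2 /sqA eqxx; repeat (case: ifP => ?); try (exfalso; lia); lra.
Qed.

Lemma cA_00 m : (7 <= m)%N -> cA m (0, 0)%N = 0.
Proof. by move=> hm; rewrite cA_val //=; [rewrite /sqA /= sqrtr0|lia|lia]. Qed.

Lemma cA_01 m : (7 <= m)%N -> cA m (0, 1)%N <= 5.
Proof.
move=> hm; rewrite cA_val //=; try lia.
by apply: sqrt_leq; rewrite /sqA /= ?expr2; lra.
Qed.

Lemma cA_0j m j : (7 <= m)%N -> (2 <= j <= m - 2)%N -> cA m (0, j) <= 1.
Proof.
move=> hm hj; rewrite cA_val //=; try lia.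
apply: sqrt_leq; rewrite /sqA /= ?expr2; repeat (case: ifP => ?); try (exfalso; lia); lra.
Qed.

Lemma cA_im m i : (7 <= m)%N -> (1 <= i <= m.-1)%N -> cA m (i, m.-1) <= 1.
Proof.
move=> hm hi; rewrite cA_val //=; try lia.
apply: sqrt_leq; rewrite /sqA /= ?expr2; repeat (case: ifP => ?); try (exfalso; lia); lra.
Qed.

Lemma dtwA m T : dtw_cost (sA m) (tA m) T = \sum_(p <- T) cA m p.
Proof. by rewrite /dtw_cost /matched big_map. Qed.

Lemma natR_eq (a b : nat) : a = b -> (a%:R : R) = b%:R.
Proof. by move=> ->. Qed.

Lemma Lp_costA m : (7 <= m)%N -> dtw_cost (sA m) (tA m) (Lp m) <= 2 * m%:R + 1.
Proof.
move=> hm; rewrite dtwA /Lp big_cons big_cat !big_map cA_00 //.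
have -> : (m - 2 = (m - 3).+1)%N by lia.
rewrite /= big_cons.
have h1 := cA_01 hm.
have h2 : \sum_(j <- iota 2 (m - 3)) cA m (0%N, j) <= (size (iota 2 (m - 3)))%:R * 1.
  by apply: sum_le_size => j; rewrite mem_iota => hj; apply: cA_0j => //; lia.
have h3 : \sum_(i <- iota 1 m.-1) cA m (i, m.-1) <= (size (iota 1 m.-1))%:R * 1.
  by apply: sum_le_size => i; rewrite mem_iota => hi; apply: cA_im => //; lia.
rewrite !size_iota !mulr1 in h2 h3.
have e0 : ((m - 3) + m.-1 + 4 = 2 * m)%N by lia.
have e := natR_eq e0; rewrite !natrD in e.
lra.
Qed.

Definition phiA m (p : nat * nat) : nat :=
  if (p.1 == m.-1) && (p.2 == m.-1) then (4 * m - 7)%N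
  else if p.2 == m.-1 then (2 * p.1 + 2 * m - 4)%N else (2 * (p.1 + p.2))%N.

Lemma A_len_lb m T : (7 <= m)%N -> is_traversal m m T ->
  4 * m%:R - 6 <= dtw_cost (sA m) (tA m) T + (size T)%:R.
Proof.
move=> hm hT.
have := trav_potential (P := fun _ => True) (f := fun p => cA m p + 1)
   (Phi := fun p => (phiA m p)%:R) hT (fun _ _ => I).
move=> /(_ _) H.
have {}H : (phiA m (m.-1, m.-1))%:R - (phiA m (0, 0)%N)%:R + (cA m (0, 0)%N + 1)
    <= \sum_(y <- T) (cA m y + 1).
  apply: H => [[a b] [c e]] /= ha hb hc he _ _ st.
  apply: le_trans (cA_lb hm hc he); apply: natR_le.
  move: hc he; case/stepP: st => /= [[-> ->]|[-> ->]|[-> ->]] => hc he;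
    rewrite /phiA /wA /=; repeat (case: ifP => ?); lia.
move: H; rewrite big_split /= sum_one -dtwA cA_00 //.
have -> : phiA m (0, 0)%N = 0%N by rewrite /phiA /=; have -> : (0 == m.-1)%N = false by lia.
have -> : phiA m (m.-1, m.-1) = (4 * m - 7)%N by rewrite /phiA /= eqxx.
have e0 : ((4 * m - 7) + 7 = 4 * m)%N by lia.
have e := natR_eq e0; rewrite !natrD in e.
lra.
Qed.

Definition phiA' m (p : nat * nat) : nat :=
  if p.1 == 0%N then (if p.2 == 0%N then 2 * m else p.2)%N
  else if p.2 == m.-1 then (if p.1 == m.-1 then 3 * m else p.1 + 1 + 2 * m)%N
  else if p.1 == p.2 then (p.1 + 2 * m)%N else 0%N.

Lemma A_len_ub m T : (7 <= m)%N -> is_traversal m m T ->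
  (forall p, p \in T -> cA m p <= 3) -> (size T <= m.+1)%N.
Proof.
move=> hm hT hc.
have := trav_potential (P := fun p => cA m p <= 3) (f := fun _ => -1)
   (Phi := fun p => - (phiA' m p)%:R) hT hc.
move=> /(_ _) H.
have {}H : - (phiA' m (m.-1, m.-1))%:R - - (phiA' m (0, 0)%N)%:R + -1
    <= \sum_(y <- T) (-1 : R).
  apply: H => [[a b] [c e]] /= ha hb hc' he hp hq st.
  have Cp := cA_cheap hm ha hb hp; have Cq := cA_cheap hm hc' he hq.
  suff : (phiA' m (a, b) + 1 <= phiA' m (c, e))%N.
    by rewrite -(ler_nat R) natrD => h'; lra.
  move: Cp Cq hc' he; rewrite /CA /=.
  case/stepP: st => /= [[-> ->]|[-> ->]|[-> ->]]; rewrite /phiA' /= => Cp Cq hc' he;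
    repeat (case: ifP => ?); lia.
move: H; rewrite sumrN sum_one.
have -> : phiA' m (0, 0)%N = (2 * m)%N by [].
have -> : phiA' m (m.-1, m.-1) = (3 * m)%N.
  by rewrite /phiA' /= eqxx; have -> : (m.-1 == 0%N) = false by lia.
rewrite -(ler_nat R) -addn1 natrD !natrM => h; lra.
Qed.

Lemma partA : exists c : R, 0 < c /\ exists m0 : nat, forall m : nat, (m0 <= m)%N ->
     exists (d : nat) (s t : curve d) (k : nat),
       size s = m /\ size t = m /\ (1 <= k)%N /\
       forall T1 T2, optimal_kDTW k s t T1 -> optimal_DTW s t T2 ->
         (size T1)%:R + c * m%:R <= (size T2)%:R.
Proof.
exists (1/2); split; first lra.
exists 16%N => m hm; exists m, (sA m), (tA m), 1%N.
have ss : size (sA m) = m by rewrite size_mkseq.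
have st : size (tA m) = m by rewrite size_mkseq.
have hm7 : (7 <= m)%N by lia.
do 3!split => //.
move=> T1 T2 [h1 o1] [h2 o2]; rewrite ss st in h1 o1 h2 o2.
have c1 : forall p, p \in T1 -> cA m p <= 3.
  move=> p hp.
  have kD : kdtw_cost 1 (sA m) (tA m) (Dg m) <= 1%:R * 3.
    apply: topk_le => // x /mapP[q hq ->].
    have [e1 e2] := mem_Dg hq; case: q hq e1 e2 => a b /= _ -> hb.
    by apply: cA_diag => //; case: hb => // hb; lia.
  have hm0 : (0 < m)%N by lia.
  have o := o1 _ (Dg_trav hm0).
  have g : (1.-1)%:R * 0 + cA m p <= topk 1 (matched (sA m) (tA m) T1).
    apply: topk_ge => //.
    - by rewrite size_map; apply: leq_trans _ (size_trav_ge h1); lia.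
    - by move=> x /mapP[q _ ->]; exact: sqrtr_ge0.
    - exact: map_f.
  rewrite /kdtw_cost in o kD; rewrite mul0r add0r in g; lra.
have l1 := A_len_ub hm7 h1 c1.
have l2 := A_len_lb hm7 h2.
have hm2 : (2 <= m)%N by lia.
have l3 := le_trans (o2 _ (Lp_trav hm2)) (Lp_costA hm7).
move: l1; rewrite -(ler_nat R) -addn1 natrD => l1.
have l4 : 16%:R <= m%:R :> R by rewrite ler_nat.
lra.
Qed.

Theorem lemmaA4 :
  (* (i), instances with |T_kDTW| < |T_DTW|, gap Omega(m) *)
  (exists c : R, 0 < c /\ exists m0 : nat, forall m : nat, (m0 <= m)%N ->
     exists (d : nat) (s t : curve d) (k : nat),
       size s = m /\ size t = m /\ (1 <= k)%N /\
       forall T1 T2, optimal_kDTW k s t T1 -> optimal_DTW s t T2 ->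
         (size T1)%:R + c * m%:R <= (size T2)%:R) /\
  (* (i), instances with |T_kDTW| > |T_DTW|, gap Omega(m) *)
  (exists c : R, 0 < c /\ exists m0 : nat, forall m : nat, (m0 <= m)%N ->
     exists (d : nat) (s t : curve d) (k : nat),
       size s = m /\ size t = m /\ (1 <= k)%N /\
       forall T1 T2, optimal_kDTW k s t T1 -> optimal_DTW s t T2 ->
         (size T2)%:R + c * m%:R <= (size T1)%:R) /\
  (* (ii) *)
  (forall m : nat, (5 <= m)%N -> forall k : nat, (1 <= k <= 4 * (m %/ 5))%N ->
     exists (d : nat) (s t : curve d),
       size s = m /\ size t = m /\
       forall T, optimal_DTW s t T -> d_kDTW k s t <> topk k (matched s t T)).
Proof.
split; first exact: partA.
split; first exact: partB.
exact: partII.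
Qed.
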